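(* Let $\xi_m>0$ and $0<\mu\le\xi_m$, and define for $\tau>0$ $$f(\mu,\tau)=2\tau\ln\frac{\cosh(\xi_m/2\tau)}{\cosh(\mu/2\tau)}+\mu\int_0^{\mu}\tanh\Big(\frac{\xi}{2\tau}\Big)\frac{d\xi}{\xi}.$$ Then $\partial f/\partial\tau<0$, $\partial f/\partial\mu>0$, $\lim_{\tau\to0^+}f(\mu,\tau)=\infty$ and $\lim_{\tau\to\infty}f(\mu,\tau)=0$. Consequently, for every $\lambda>0$ the equation $\xi_m/\lambda=f(\mu,\tau)$ has a unique positive solution $\tau=T_c(\mu,\lambda)$. *)

(* Defs.v *)
From Stdlib Require Import Reals Lra ClassicalEpsilon.
Open Scope R_scope.

(* Total Riemann integral: RiemannInt of any integrability witness if one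
   exists (the value is witness-independent, RiemannInt_P5), 0 otherwise. *)
Definition Rint (g : R -> R) (a b : R) : R :=
  match excluded_middle_informative (exists _ : Riemann_integrable g a b, True) with
  | left H => RiemannInt (proj1_sig (constructive_indefinite_description _ H))
  | right _ => 0
  end.

(* Integrand tanh(xi/(2 tau)) / xi, with its continuous value 1/(2 tau) at xi = 0
   (a single point, irrelevant for the integral). *)
Definition integrand (tau xi : R) : R :=
  if Req_EM_T xi 0 then / (2 * tau) else tanh (xi / (2 * tau)) / xi.

Definition fT (xim mu tau : R) : R :=
  2 * tau * ln (cosh (xim / (2 * tau)) / cosh (mu / (2 * tau)))
  + mu * Rint (integrand tau) 0 mu.

(* Main.v *)
Require Import Defs.
From Stdlib Require Import Reals Lra ClassicalEpsilon.
From Coquelicot Require Import Coquelicot.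
Open Scope R_scope.


Lemma cosh_pos x : 0 < cosh x.
Proof. unfold cosh. pose proof (exp_pos x); pose proof (exp_pos (-x)); lra. Qed.

Lemma exp_inv_prod x : exp x * exp (-x) = 1.
Proof. rewrite <- exp_plus. replace (x + - x) with 0 by ring. apply exp_0. Qed.

Lemma cosh_sinh x : cosh x * cosh x - sinh x * sinh x = 1.
Proof. unfold cosh, sinh. pose proof (exp_inv_prod x). nra. Qed.

Lemma cosh_ge1 x : 1 <= cosh x.
Proof. pose proof (cosh_sinh x). pose proof (cosh_pos x). nra. Qed.

Lemma sinh_pos x : 0 < x -> 0 < sinh x.
Proof. intro. unfold sinh. assert (exp (-x) < exp x) by (apply exp_increasing; lra). lra. Qed.

Lemma sinh_nonneg x : 0 <= x -> 0 <= sinh x.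
Proof. intro. destruct (Req_dec x 0). subst; rewrite sinh_0; lra. left; apply sinh_pos; lra. Qed.

Lemma cosh_gt1 x : 0 < x -> 1 < cosh x.
Proof. intro. pose proof (cosh_sinh x). pose proof (cosh_pos x). pose proof (sinh_pos x H). nra. Qed.

Lemma tanh_pos x : 0 < x -> 0 < tanh x.
Proof. intro. unfold tanh. pose proof (cosh_pos x). pose proof (sinh_pos x H).
 apply Rdiv_lt_0_compat; lra. Qed.

Lemma tanh_nonneg x : 0 <= x -> 0 <= tanh x.
Proof. intro. unfold tanh. pose proof (cosh_pos x). pose proof (sinh_nonneg x H).
 apply Rmult_le_pos; [lra| left; apply Rinv_0_lt_compat; lra]. Qed.

Lemma tanh_0 : tanh 0 = 0.
Proof. unfold tanh. rewrite sinh_0. unfold Rdiv; ring. Qed.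

Definition LC (y : R) := ln (cosh y).

Lemma LC_deriv y : derivable_pt_lim LC y (tanh y).
Proof.
  unfold LC. replace (tanh y) with (/ cosh y * sinh y).
  2:{ unfold tanh, Rdiv; ring. }
  apply (derivable_pt_lim_comp cosh ln). apply derivable_pt_lim_cosh.
  apply derivable_pt_lim_ln. apply cosh_pos.
Qed.

Lemma tanh_deriv y : derivable_pt_lim tanh y (/ (cosh y * cosh y)).
Proof.
  pose proof (cosh_pos y).
  change tanh with (div_fct sinh cosh).
  replace (/ (cosh y * cosh y)) with ((cosh y * cosh y - sinh y * sinh y) / (cosh y)²).
  2:{ rewrite cosh_sinh. unfold Rsqr, Rdiv; ring. }
  apply derivable_pt_lim_div. apply derivable_pt_lim_sinh. apply derivable_pt_lim_cosh. lra.
Qed.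

Lemma mono_deriv f f' a b : a <= b ->
  (forall c, a <= c <= b -> derivable_pt_lim f c (f' c)) ->
  (forall c, a < c < b -> 0 <= f' c) -> f a <= f b.
Proof.
  intros Hab Hd Hp. destruct (Req_dec a b). subst; lra.
  destruct (MVT_cor2 f f' a b) as [c [E Hc]]; [lra|exact Hd|].
  pose proof (Hp c Hc). nra.
Qed.

Lemma smono_deriv f f' a b : a < b ->
  (forall c, a <= c <= b -> derivable_pt_lim f c (f' c)) ->
  (forall c, a < c < b -> 0 < f' c) -> f a < f b.
Proof.
  intros Hab Hd Hp.
  destruct (MVT_cor2 f f' a b) as [c [E Hc]]; [lra|exact Hd|].
  pose proof (Hp c Hc). nra.
Qed.

Lemma tanh_le_id y : 0 <= y -> tanh y <= y.
Proof.
  intro Hy.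
  assert (H := mono_deriv (fun x => x - tanh x) (fun x => 1 - / (cosh x * cosh x)) 0 y Hy).
  cbv beta in H; rewrite tanh_0 in H. cut (0 - 0 <= y - tanh y). lra. apply H.
  - intros c _. apply derivable_pt_lim_minus. apply derivable_pt_lim_id. apply tanh_deriv.
  - intros c _. pose proof (cosh_ge1 c).
    assert (/ (cosh c * cosh c) <= 1). { rewrite <- Rinv_1. apply Rinv_le_contravar; nra. } lra.
Qed.

Lemma LC_0 : LC 0 = 0.
Proof. unfold LC. rewrite cosh_0. apply ln_1. Qed.

Lemma LC_le_ytanh y : 0 <= y -> LC y <= y * tanh y.
Proof.
  intro Hy.
  assert (H := mono_deriv (fun x => x * tanh x - LC x) (fun x => (1 * tanh x + x * / (cosh x * cosh x)) - tanh x) 0 y Hy).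
  cbv beta in H; rewrite LC_0 in H. cut (0 * tanh 0 - 0 <= y * tanh y - LC y). lra. apply H.
  - intros c _. apply derivable_pt_lim_minus.
    apply (derivable_pt_lim_mult id tanh). apply derivable_pt_lim_id. apply tanh_deriv.
    apply LC_deriv.
  - intros c Hc. pose proof (cosh_pos c).
    assert (0 <= / (cosh c * cosh c)) by (left; apply Rinv_0_lt_compat; nra). nra.
Qed.

Lemma LC_le_sq y : 0 <= y -> LC y <= y * y.
Proof. intro. pose proof (LC_le_ytanh y H). pose proof (tanh_le_id y H). nra. Qed.

Lemma LC_mono x y : 0 <= x <= y -> LC x <= LC y.
Proof.
  intros [Hx Hxy]. apply (mono_deriv LC tanh x y Hxy).
  intros; apply LC_deriv. intros; apply tanh_nonneg; lra.
Qed.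

Lemma LC_pos x : 0 < x -> 0 < LC x.
Proof. intro. unfold LC. rewrite <- ln_1. apply ln_increasing. lra. apply cosh_gt1; lra. Qed.

Lemma tanh_mono x y : x <= y -> tanh x <= tanh y.
Proof.
  intro Hxy. apply (mono_deriv tanh (fun c => / (cosh c * cosh c)) x y Hxy).
  intros; apply tanh_deriv. intros c _. pose proof (cosh_pos c).
  left; apply Rinv_0_lt_compat; nra.
Qed.

Definition h (u : R) : R := if Req_EM_T u 0 then 1 else tanh u / u.

Lemma h_cont_pt u : continuity_pt h u.
Proof.
  destruct (Req_dec u 0) as [->|Hu].
  - intros eps Heps. destruct (tanh_deriv 0 eps Heps) as [d Hd].
    exists d; split; [apply cond_pos|]. intros x [[_ Hx] Hdx].
    unfold h. destruct (Req_EM_T x 0); [congruence|]. destruct (Req_EM_T 0 0); [|congruence].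
    simpl in *. unfold R_dist in *. rewrite Rminus_0_r in Hdx.
    specialize (Hd x (not_eq_sym Hx) Hdx). rewrite Rplus_0_l, tanh_0, cosh_0 in Hd.
    replace (/ (1*1)) with 1 in Hd by field. replace (tanh x - 0) with (tanh x) in Hd by ring. exact Hd.
  - apply (continuity_pt_locally_ext (fun x => tanh x / x) h (Rabs u)).
    + apply Rabs_pos_lt; exact Hu.
    + intros y Hy. unfold h. destruct (Req_EM_T y 0); [|reflexivity].
      subst. unfold Rdist in Hy. rewrite Rminus_0_l, Rabs_Ropp in Hy. lra.
    + apply derivable_continuous_pt.
      exists ((/ (cosh u * cosh u) * u - 1 * tanh u) / u²).
      change (fun x => tanh x / x) with (div_fct tanh id).
      apply derivable_pt_lim_div. apply tanh_deriv. apply derivable_pt_lim_id. exact Hu.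
Qed.

Lemma h_cont u : continuous h u.
Proof. apply continuity_pt_filterlim, h_cont_pt. Qed.

Lemma h_exRInt a b : ex_RInt h a b.
Proof. apply (@ex_RInt_continuous R_CompleteNormedModule). intros; apply h_cont. Qed.

Definition H (x : R) : R := RInt h 0 x.

Lemma H_deriv x : derivable_pt_lim H x (h x).
Proof.
  apply is_derive_Reals. apply (is_derive_RInt h H 0 x).
  apply filter_forall. intro b. exact (@RInt_correct R_CompleteNormedModule h 0 b (h_exRInt 0 b)). apply h_cont.
Qed.

Lemma H_0 : H 0 = 0.
Proof. unfold H. rewrite RInt_point. reflexivity. Qed.

Lemma h_pos u : 0 < u -> 0 < h u.
Proof. intro. unfold h. destruct (Req_EM_T u 0). lra.
  apply Rdiv_lt_0_compat; [apply tanh_pos|]; lra. Qed.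

Lemma h_le1 u : 0 <= u -> h u <= 1.
Proof. intro. unfold h. destruct (Req_EM_T u 0). lra.
  apply Rcomplements.Rle_div_l. lra. pose proof (tanh_le_id u H0). lra. Qed.

Lemma h_mul u : u * h u = tanh u.
Proof. unfold h. destruct (Req_EM_T u 0). subst; rewrite tanh_0; ring. field; auto. Qed.

Lemma H_pos x : 0 < x -> 0 < H x.
Proof. intro. rewrite <- H_0. apply (smono_deriv H h 0 x H0).
  intros; apply H_deriv. intros; apply h_pos; lra. Qed.

Lemma H_nonneg x : 0 <= x -> 0 <= H x.
Proof. intro. destruct (Req_dec x 0). subst; rewrite H_0; lra. left; apply H_pos; lra. Qed.

Lemma H_le x : 0 <= x -> H x <= x.
Proof. intro Hx.
  assert (K := mono_deriv (fun y => y - H y) (fun y => 1 - h y) 0 x Hx).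
  cbv beta in K. rewrite H_0 in K. cut (0 - 0 <= x - H x). lra. apply K.
  intros; apply derivable_pt_lim_minus. apply derivable_pt_lim_id. apply H_deriv.
  intros c Hc. pose proof (h_le1 c). lra.
Qed.

Lemma H_lower x : 1 <= x -> tanh 1 * ln x <= H x.
Proof. intro Hx.
  assert (K := mono_deriv (fun y => H y - tanh 1 * ln y) (fun y => h y - tanh 1 * / y) 1 x Hx).
  cbv beta in K. rewrite ln_1 in K. pose proof (H_pos 1 ltac:(lra)).
  cut (H 1 - tanh 1 * 0 <= H x - tanh 1 * ln x). lra. apply K.
  - intros c Hc. apply derivable_pt_lim_minus. apply H_deriv.
    apply derivable_pt_lim_scal. apply derivable_pt_lim_ln. lra.
  - intros c Hc. unfold h. destruct (Req_EM_T c 0). lra.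
    pose proof (tanh_mono 1 c ltac:(lra)).
    replace (tanh c / c - tanh 1 * / c) with ((tanh c - tanh 1) / c) by (field; lra).
    apply Rcomplements.Rdiv_le_0_compat; lra.
Qed.

Lemma Rint_RInt g a b : ex_RInt g a b -> Rint g a b = RInt g a b.
Proof.
  intro E. unfold Rint. destruct excluded_middle_informative as [e|n].
  - destruct (constructive_indefinite_description _ e) as [pr ?]. simpl.
    symmetry. apply RInt_Reals.
  - exfalso. apply n. exists (ex_RInt_Reals_0 g a b E). exact I.
Qed.

Lemma Rint_integrand t m : t <> 0 -> Rint (integrand t) 0 m = H (m * / (2 * t)).
Proof.
  intro Ht. set (a := / (2 * t)).
  assert (Ha : a <> 0) by (unfold a; apply Rinv_neq_0_compat; lra).
  assert (E : forall x, scal a (h (a * x + 0)) = integrand t x).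
  { intro x. unfold scal; simpl. unfold mult; simpl. unfold integrand, h.
    destruct (Req_EM_T x 0) as [Hx|Hx]; destruct (Req_EM_T (a * x + 0) 0) as [E|E].
    - unfold a; ring.
    - exfalso; apply E; subst; ring.
    - exfalso. apply Hx. apply (Rmult_eq_reg_l a); [|exact Ha]. lra.
    - replace (x / (2 * t)) with (a * x + 0) by (unfold a; field; lra). field. split; auto.
      }
  assert (Ex : ex_RInt h (a * 0 + 0) (a * m + 0)) by apply h_exRInt.
  assert (Ex2 : ex_RInt (integrand t) 0 m).
  { eapply ex_RInt_ext; [|exact (ex_RInt_comp_lin h a 0 0 m Ex)]. intros; apply E. }
  rewrite Rint_RInt by exact Ex2.
  transitivity (RInt (fun x => scal a (h (a * x + 0))) 0 m).
  { symmetry; apply RInt_ext; intros; apply E. }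
  transitivity (RInt h (a * 0 + 0) (a * m + 0)). { exact (RInt_comp_lin h a 0 0 m Ex). } unfold H.
  f_equal; ring.
Qed.

Lemma fT_eq xim m t : t <> 0 ->
  fT xim m t = 2 * t * (LC (xim * / (2 * t)) - LC (m * / (2 * t))) + m * H (m * / (2 * t)).
Proof.
  intro Ht. unfold fT. rewrite Rint_integrand by exact Ht. unfold LC.
  rewrite ln_div by apply cosh_pos. reflexivity.
Qed.

Lemma Derive_LC y : Derive (fun x => LC x) y = tanh y.
Proof. apply is_derive_unique. apply is_derive_Reals. apply LC_deriv. Qed.
Lemma Derive_H y : Derive (fun x => H x) y = h y.
Proof. apply is_derive_unique. apply is_derive_Reals. apply H_deriv. Qed.
Lemma ex_LC y : ex_derive (fun x => LC x) y.
Proof. exists (tanh y). apply is_derive_Reals. apply LC_deriv. Qed.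
Lemma ex_H y : ex_derive (fun x => H x) y.
Proof. exists (h y). apply is_derive_Reals. apply H_deriv. Qed.

Lemma h_eq u : u <> 0 -> h u = tanh u / u.
Proof. intro. unfold h. destruct (Req_EM_T u 0); [contradiction|reflexivity]. Qed.

Definition Dtau xim mu tau :=
  2 * (LC (xim * / (2 * tau)) - LC (mu * / (2 * tau)) - xim * / (2 * tau) * tanh (xim * / (2 * tau))).

Lemma dtau xim mu tau : 0 < mu -> 0 < tau ->
  derivable_pt_lim (fun t => fT xim mu t) tau (Dtau xim mu tau).
Proof.
  intros Hmu Htau. apply is_derive_Reals.
  apply (is_derive_ext_loc (fun t => 2 * t * (LC (xim * / (2 * t)) - LC (mu * / (2 * t))) + mu * H (mu * / (2 * t)))).
  { apply (filter_imp (fun u : R => 0 < u)); [|exact (open_gt 0 tau Htau)]. intros y Hy. symmetry. apply fT_eq. simpl in Hy. lra. }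
  auto_derive.
  { repeat split; try apply ex_LC; try apply ex_H; lra. }
  rewrite !Derive_LC, Derive_H. rewrite h_eq.
  2:{ apply Rmult_integral_contrapositive_currified; [lra|]. apply Rinv_neq_0_compat; lra. }
  unfold Dtau. field. lra.
Qed.

Lemma dtau_neg xim mu tau : 0 < mu -> mu <= xim -> 0 < tau -> Dtau xim mu tau < 0.
Proof.
  intros Hmu Hm Htau. unfold Dtau. set (a := / (2 * tau)).
  assert (0 < a) by (unfold a; apply Rinv_0_lt_compat; lra).
  pose proof (LC_le_ytanh (xim * a) ltac:(nra)).
  pose proof (LC_pos (mu * a) ltac:(nra)). lra.
Qed.

Lemma dmu xim mu tau : 0 < mu -> 0 < tau ->
  derivable_pt_lim (fun m => fT xim m tau) mu (H (mu * / (2 * tau))).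
Proof.
  intros Hmu Htau. apply is_derive_Reals.
  apply (is_derive_ext (fun m => 2 * tau * (LC (xim * / (2 * tau)) - LC (m * / (2 * tau))) + m * H (m * / (2 * tau)))).
  { intros y. symmetry. apply fT_eq. lra. }
  auto_derive.
  { repeat split; try apply ex_LC; try apply ex_H; lra. }
  rewrite !Derive_LC, Derive_H. rewrite h_eq.
  2:{ apply Rmult_integral_contrapositive_currified; [lra|]. apply Rinv_neq_0_compat; lra. }
  field. lra.
Qed.

Lemma f_lower xim mu tau : 0 < mu -> mu <= xim -> 0 < tau ->
  mu * H (mu * / (2 * tau)) <= fT xim mu tau.
Proof.
  intros Hmu Hm Ht. rewrite fT_eq by lra. set (a := / (2 * tau)).
  assert (0 < a) by (unfold a; apply Rinv_0_lt_compat; lra).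
  pose proof (LC_mono (mu * a) (xim * a) ltac:(split; nra)). nra.
Qed.

Lemma f_upper xim mu tau : 0 < mu -> mu <= xim -> 0 < tau ->
  fT xim mu tau <= (xim * xim + mu * mu) * / (2 * tau).
Proof.
  intros Hmu Hm Ht. rewrite fT_eq by lra. set (a := / (2 * tau)).
  assert (0 < a) by (unfold a; apply Rinv_0_lt_compat; lra).
  assert (E : 2 * tau * a = 1) by (unfold a; field; lra).
  pose proof (LC_le_sq (xim * a) ltac:(nra)).
  pose proof (LC_pos (mu * a) ltac:(nra)).
  pose proof (H_le (mu * a) ltac:(nra)).
  assert (2 * tau * LC (xim * a) <= 2 * tau * (xim * a * (xim * a))) by nra.
  assert (2 * tau * (xim * a * (xim * a)) = xim * xim * a) by (transitivity (xim * xim * a * (2 * tau * a)); [ring | rewrite E; ring]).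
  nra.
Qed.

Lemma f_nonneg xim mu tau : 0 < mu -> mu <= xim -> 0 < tau -> 0 <= fT xim mu tau.
Proof.
  intros Ha Hb Hc. pose proof (f_lower xim mu tau Ha Hb Hc).
  assert (0 < / (2 * tau)) by (apply Rinv_0_lt_compat; lra).
  pose proof (H_nonneg (mu * / (2 * tau)) ltac:(nra)). nra.
Qed.

Lemma f_lim0 xim mu : 0 < mu -> mu <= xim -> forall M, exists delta, 0 < delta /\
     forall tau, 0 < tau < delta -> M < fT xim mu tau.
Proof.
  intros Hmu Hm M.
  pose proof (tanh_pos 1 ltac:(lra)) as Ht1.
  set (K := Rabs M / (mu * tanh 1) + 1).
  assert (0 < mu * tanh 1) by nra.
  assert (HK : Rabs M / (mu * tanh 1) * (mu * tanh 1) = Rabs M) by (field; lra).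
  assert (0 <= Rabs M / (mu * tanh 1)) by (apply Rcomplements.Rdiv_le_0_compat; [apply Rabs_pos|lra]).
  set (X := exp K).
  assert (HX : 1 < X). { unfold X. rewrite <- exp_0. apply exp_increasing. unfold K; lra. }
  exists (mu / (2 * X)). split. { apply Rdiv_lt_0_compat; lra. }
  intros tau [Ht Htd].
  assert (Hx : X < mu * / (2 * tau)).
  { apply Rmult_lt_reg_r with (2 * tau). lra.
    replace (mu * / (2 * tau) * (2 * tau)) with mu by (field; lra).
    apply Rmult_lt_compat_l with (r := 2 * X) in Htd; [|lra].
    unfold Rdiv in Htd. replace (2 * X * (mu * / (2 * X))) with mu in Htd by (field; lra). lra. }
  pose proof (f_lower xim mu tau Hmu Hm Ht).
  pose proof (H_lower (mu * / (2 * tau)) ltac:(lra)).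
  assert (K < ln (mu * / (2 * tau))).
  { unfold X in Hx. rewrite <- (ln_exp K). apply ln_increasing. apply exp_pos. exact Hx. }
  assert (tanh 1 * K < tanh 1 * ln (mu * / (2 * tau))) by nra.
  assert (mu * (tanh 1 * K) = Rabs M + mu * tanh 1).
  { unfold K. rewrite Rmult_plus_distr_l. rewrite <- HK at 1. field. lra. }
  pose proof (Rle_abs M). nra.
Qed.

Lemma f_liminf xim mu : 0 < mu -> mu <= xim -> forall eps, 0 < eps -> exists N,
     forall tau, N < tau -> Rabs (fT xim mu tau) < eps.
Proof.
  intros Hmu Hm eps He. assert (0 < xim) by lra. exists ((xim * xim + mu * mu) / eps).
  intros tau Ht.
  assert (0 < (xim * xim + mu * mu) / eps) by (apply Rdiv_lt_0_compat; nra).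
  pose proof (f_nonneg xim mu tau Hmu Hm ltac:(lra)).
  pose proof (f_upper xim mu tau Hmu Hm ltac:(lra)).
  rewrite Rabs_pos_eq by lra.
  assert ((xim * xim + mu * mu) < eps * tau).
  { apply Rmult_lt_compat_l with (r := eps) in Ht; [|lra].
    replace (eps * ((xim * xim + mu * mu) / eps)) with (xim * xim + mu * mu) in Ht by (field; lra). lra. }
  assert ((xim * xim + mu * mu) * / (2 * tau) < eps).
  { apply Rmult_lt_reg_r with (2 * tau). lra.
    replace ((xim * xim + mu * mu) * / (2 * tau) * (2 * tau)) with (xim * xim + mu * mu) by (field; lra). nra. }
  lra.
Qed.

Lemma f_strict xim mu s t : 0 < mu -> mu <= xim -> 0 < s -> s < t -> fT xim mu t < fT xim mu s.
Proof.
  intros Ha Hb Hc Hd. destruct (MVT_cor2 (fun t => fT xim mu t) (Dtau xim mu) s t Hd) as [c [E Hcc]].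
  { intros c Hc2. apply dtau; lra. }
  pose proof (dtau_neg xim mu c Ha Hb ltac:(lra)). nra.
Qed.

Theorem mainTheorem8 (xim mu : R) (Hxim : 0 < xim) (Hmu0 : 0 < mu) (Hmu1 : mu <= xim) :
  (forall tau, 0 < tau ->
     exists l, derivable_pt_lim (fun t => fT xim mu t) tau l /\ l < 0) /\
  (forall tau, 0 < tau ->
     exists l, derivable_pt_lim (fun m => fT xim m tau) mu l /\ 0 < l) /\
  (forall M, exists delta, 0 < delta /\
     forall tau, 0 < tau < delta -> M < fT xim mu tau) /\
  (forall eps, 0 < eps -> exists N,
     forall tau, N < tau -> Rabs (fT xim mu tau) < eps) /\
  (forall lambda, 0 < lambda ->
     exists! tau, 0 < tau /\ xim / lambda = fT xim mu tau).
Proof.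
  split; [|split; [|split; [|split]]].
  - intros tau Ht. exists (Dtau xim mu tau). split. apply dtau; lra. apply dtau_neg; lra.
  - intros tau Ht. exists (H (mu * / (2 * tau))). split. apply dmu; lra.
    apply H_pos. assert (0 < / (2 * tau)) by (apply Rinv_0_lt_compat; lra). nra.
  - apply f_lim0; lra.
  - apply f_liminf; lra.
  - intros lam Hl. set (c := xim / lam). assert (Hc : 0 < c) by (apply Rdiv_lt_0_compat; lra).
    destruct (f_lim0 xim mu Hmu0 Hmu1 c) as [d [Hd Hd']].
    set (t1 := d / 2). assert (F1 : c < fT xim mu t1) by (apply Hd'; unfold t1; lra).
    destruct (f_liminf xim mu Hmu0 Hmu1 c Hc) as [N HN].
    set (t2 := Rmax (N + 1) (t1 + 1)).
    assert (Ht2 : N < t2 /\ t1 < t2) by (unfold t2; split; [apply Rlt_le_trans with (N+1); [lra|apply Rmax_l] | apply Rlt_le_trans with (t1+1); [lra|apply Rmax_r]]).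
    assert (F2 : fT xim mu t2 < c) by (pose proof (HN t2 (proj1 Ht2)); pose proof (Rle_abs (fT xim mu t2)); lra).
    destruct (Ranalysis5.IVT_interv (fun t => c - fT xim mu t) t1 t2) as [z [Hz Ez]].
    + intros a Ha. apply continuity_pt_minus. apply continuity_pt_const. intros x y; reflexivity.
      apply derivable_continuous_pt. exists (Dtau xim mu a). apply dtau; unfold t1 in *; lra.
    + lra.
    + lra.
    + lra.
    + exists z. split. split. unfold t1 in *; lra. lra.
      intros z' [Hz' E']. destruct (Rtotal_order z z') as [Hlt|[Heq|Hgt]]; auto.
      * pose proof (f_strict xim mu z z' Hmu0 Hmu1 ltac:(unfold t1 in *; lra) Hlt). lra.
      * pose proof (f_strict xim mu z' z Hmu0 Hmu1 Hz' Hgt). lra.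
Qed.
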